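(* Let $\lambda\approx1.5214$ be the real root of $t^3-t-2$. Define a weight on monomials (compositions in $\operatorname{End}\Lambda$) in the letters $x_i,v_i$ by $\mathrm{wt}(v_i)=\lambda^i$, $\mathrm{wt}(x_i)=-\lambda^i$, extended additively over the letters of a monomial. Then for every tail monomial $r_{n-3}$ and every $n\ge 0$, $$1.3\,\lambda^{n-5}<\mathrm{wt}(r_{n-3}v_n)\le\lambda^n,$$ and for every tail monomial $r_{n-5}$ and every $n\ge2$, $$1.1\,\lambda^{n-4}<\mathrm{wt}(r_{n-5}x_{n-2}v_n)\le 2\lambda^{n-3}.$$
   Context: $\Lambda$ is the Grassmann algebra on odd generators $x_0,x_1,\dots$, $x_i$ acting by left multiplication; $v_i=\sum_{k\ge0}\big(\prod_{n=0}^{k-1}x_{i+3n}x_{i+3n+1}\big)\partial_{i+3k}$ where $\partial_i$ is the superderivation with $\partial_i(x_j)=\delta_{ij}$. A tail monomial is $r_m=x_0^{\xi_0}\cdots x_m^{\xi_m}$, $\xi_i\in\{0,1\}$, with $r_m=1$ for $m<0$ (weight $0$). *)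

(* Defs.v *)
From HB Require Import structures.
From mathcomp Require Import all_boot all_order all_algebra.
From mathcomp Require Import reals.
Set Implicit Arguments. Unset Strict Implicit. Unset Printing Implicit Defensive.
Import Order.TTheory GRing.Theory Num.Theory.
Local Open Scope ring_scope.

(* Letters of monomials in End(Lambda): x_i (left multiplication) and v_i. *)
Inductive letter := LX of nat | LV of nat.

Definition monomial := seq letter.

Definition wt_letter (R : ringType) (lam : R) (a : letter) : R :=
  match a with LX i => - lam ^+ i | LV i => lam ^+ i end.

Definition wt (R : ringType) (lam : R) (w : monomial) : R :=
  \sum_(a <- w) wt_letter lam a.

(* Tail monomial r_m = x_0^{xi_0} ... x_m^{xi_m}, written here as
   tail xi k = r_{k-1} (indices i < k); tail xi 0 = 1 (empty word),
   which covers r_m = 1 for m < 0. *)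
Definition tail (xi : nat -> bool) (k : nat) : monomial :=
  [seq LX i | i <- iota 0 k & xi i].

(* Main.v *)
Require Import Defs.
From HB Require Import structures.
From mathcomp Require Import all_boot all_order all_algebra.
From mathcomp Require Import reals.
From mathcomp Require Import ring lra zify.
Import Order.TTheory GRing.Theory Num.Theory.
Local Open Scope ring_scope.

Lemma wt_cat (R : ringType) (lam : R) a b : wt lam (a ++ b) = wt lam a + wt lam b.
Proof. by rewrite /wt big_cat. Qed.

Lemma tail_bound {R : realType} {lam : R} (h1 : 1 <= lam) xi k :
  (lam - 1) * (- wt lam (tail xi k)) <= lam ^+ k - 1.
Proof.
elim: k => [|k IH]; first by rewrite /tail /wt big_nil; lra.
have -> : tail xi k.+1 = tail xi k ++ (if xi k then [:: LX k] else [::]).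
  by rewrite /tail -addn1 iotaD filter_cat map_cat /= add0n; case: (xi k).
rewrite wt_cat opprD mulrDr exprS.
have hk : 1 <= lam ^+ k by apply: exprn_ege1.
case: (xi k); rewrite /wt ?big_cons ?big_nil /= ; rewrite -/(wt lam (tail xi k)) ?addr0 ?oppr0 ?opprK ?mulr0 ?addr0; nra.
Qed.

Lemma lam_bounds {R : realType} {lam : R} (hlam : lam ^+ 3 - lam - 2 = 0) :
  152/100 < lam /\ lam < 153/100.
Proof.
have e : lam ^+ 3 = lam * lam * lam by rewrite !exprS expr0 mulr1 mulrA.
rewrite e in hlam.
have h0 : 0 < lam.
  case: (ltrP 0 lam) => // hl.
  have : lam * lam <= 1 \/ 1 < lam * lam by case: (lerP (lam*lam) 1); [left|right].
  case => hh; nra.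
have h1 : 1 < lam by nra.
have q : 0 < lam * lam + 152/100 * lam + 5104/10000 by nra.
have q2 : 0 < lam * lam + 153/100 * lam + 5309/10000 by nra.
split; nra.
Qed.

Lemma tail_nonpos {R : realType} {lam : R} (h1 : 1 <= lam) xi k :
  wt lam (tail xi k) <= 0.
Proof.
rewrite /wt /tail big_map big_filter; rewrite -oppr_ge0 -sumrN.
apply: sumr_ge0 => i _ /=; rewrite opprK; exact: exprn_ge0 (le_trans ler01 h1).
Qed.

Theorem lemma8p1 (R : realType) (lam : R) (hlam : lam ^+ 3 - lam - 2 = 0) :
  (forall (xi : nat -> bool) (n : nat),
      (13 / 10) * lam ^ (n%:Z - 5) < wt lam (tail xi (n - 2) ++ [:: LV n])
   /\ wt lam (tail xi (n - 2) ++ [:: LV n]) <= lam ^+ n)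
  /\
  (forall (xi : nat -> bool) (n : nat), (2 <= n)%N ->
      (11 / 10) * lam ^ (n%:Z - 4) < wt lam (tail xi (n - 4) ++ [:: LX (n - 2); LV n])
   /\ wt lam (tail xi (n - 4) ++ [:: LX (n - 2); LV n]) <= 2 * lam ^ (n%:Z - 3)).
Proof.
have [hl hu] := lam_bounds hlam.
have l1 : 1 <= lam by lra.
have ln0 : lam != 0 by apply/eqP; lra.
have e3 : lam ^+ 3 = lam * lam * lam by rewrite !exprS expr0 mulr1 mulrA.
have e5 : lam ^+ 5 = lam * lam * (lam * lam * lam) by rewrite !exprS expr0 mulr1 !mulrA.
have e4 : lam ^+ 4 = lam * (lam * lam * lam) by rewrite !exprS expr0 mulr1 !mulrA.
have e2 : lam ^+ 2 = lam * lam by rewrite !exprS expr0 mulr1.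
rewrite e3 in hlam.
split => xi n.
  set P := lam ^ (n%:Z - 5).
  have P0 : 0 < P by rewrite /P exprz_gt0 //; lra.
  have eN : lam ^+ n = P * lam ^+ 5.
    by change (lam ^+ 5) with (lam ^ (5%:Z)); rewrite /P -expfzDr // subrK.
  rewrite wt_cat /wt big_cons big_nil /= addr0 -/(wt lam _).
  have tn := tail_nonpos l1 xi (n - 2).
  split; last lra.
  case: (leqP 2 n) => hn.
    have eM : lam ^+ (n - 2) = P * lam ^+ 3.
      change (lam ^+ 3) with (lam ^ (3%:Z)); rewrite /P -expfzDr //.
      have -> : (n%:Z - 5 + 3 = (n - 2)%N%:Z)%R by lia.
      by [].
    have tb := tail_bound l1 xi (n - 2).
    rewrite eM e3 in tb; rewrite eN e5.
    have ea : lam * lam * lam = lam + 2 by lra.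
    have poly : 0 < (lam - 1) * (lam * lam * (lam * lam * lam)) - lam * lam * lam - 13/10 * (lam - 1).
      rewrite ea; nra.
    set W := wt lam _ in tb *.
    have key : 0 < (lam - 1) * (P * (lam * lam * (lam * lam * lam)) + W - 13 / 10 * P).
      have : (lam - 1) * (P * (lam * lam * (lam * lam * lam)) + W - 13 / 10 * P) =
        P * ((lam - 1) * (lam * lam * (lam * lam * lam)) - lam * lam * lam - 13/10 * (lam - 1))
        + (P * (lam * lam * lam) - (lam - 1) * - W) by ring.
      move=> ->; nra.
    have hpos : 0 < lam - 1 by lra.
    rewrite (pmulr_rgt0 _ hpos) in key.
    lra.
  have -> : (n - 2 = 0)%N by lia.
  rewrite /tail /wt big_nil eN e5 add0r.
  have h5 : 13/10 < lam * lam * (lam * lam * lam) by nra.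
  nra.
move=> hn.
set P := lam ^ (n%:Z - 4).
have P0 : 0 < P by rewrite /P exprz_gt0 //; lra.
have eN : lam ^+ n = P * lam ^+ 4.
  by change (lam ^+ 4) with (lam ^ (4%:Z)); rewrite /P -expfzDr // subrK.
have eN2 : lam ^+ (n - 2) = P * lam ^+ 2.
  change (lam ^+ 2) with (lam ^ (2%:Z)); rewrite /P -expfzDr //.
  have -> : (n%:Z - 4 + 2 = (n - 2)%N%:Z)%R by lia.
  by [].
have eN3 : lam ^ (n%:Z - 3) = P * lam.
  by rewrite /P -[X in P * X]expr1z -expfzDr // -addrA.
rewrite eN3 wt_cat /wt !big_cons big_nil /= addr0 -/(wt lam _) eN eN2 e4 e2.
have tn := tail_nonpos l1 xi (n - 4).
have ee : P * (lam * (lam*lam*lam)) - P*(lam*lam) - 2*(P*lam) = P*lam*(lam*lam*lam - lam - 2) by ring.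
rewrite hlam mulr0 in ee.
split; last lra.
case: (leqP 4 n) => hn4.
  have eM : lam ^+ (n - 4) = P.
    rewrite /P.
    have -> : (n%:Z - 4 = (n - 4)%N%:Z)%R by lia.
    by [].
  have tb := tail_bound l1 xi (n - 4).
  rewrite eM in tb.
  set W := wt lam _ in tb *.
  have poly : 0 < (lam - 1) * (2 * lam - 11/10) - 1 by nra.
  have key : 0 < (lam - 1) * (W + 2 * (P * lam) - 11 / 10 * P).
    have : (lam - 1) * (W + 2 * (P * lam) - 11 / 10 * P) =
      P * ((lam - 1) * (2 * lam - 11/10) - 1) + (P - (lam - 1) * - W) by ring.
    move=> ->; nra.
  have hpos : 0 < lam - 1 by lra.
  rewrite (pmulr_rgt0 _ hpos) in key.
  lra.
have -> : (n - 4 = 0)%N by lia.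
rewrite /tail /wt big_nil add0r.
nra.
Qed.
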